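(* Each of $d_{GH}$, $d^{us}_{GH}$, $d^{ls}_{GH}$, $d^{rc}_{GH}$ is a generalized pseudometric on nonempty metric spaces: for $d^{gen}_{GH}$ any one of them and any nonempty metric spaces $X,Y,Z$, we have $d^{gen}_{GH}(X,Y)\in[0,\infty]$, $d^{gen}_{GH}(X,X)=0$, $d^{gen}_{GH}(X,Y)=d^{gen}_{GH}(Y,X)$, and $d^{gen}_{GH}(X,Z)\le d^{gen}_{GH}(X,Y)+d^{gen}_{GH}(Y,Z)$.
   Context: For a metric space, $|xy|$ denotes distance. A set-valued map $f:X\rightrightarrows Y$ assigns to each $x\in X$ a nonempty $f(x)\subseteq Y$ and is identified with its graph. A correspondence between $X$ and $Y$ is a subset $R\subseteq X\times Y$ whose projections to $X$ and to $Y$ are both surjective, regarded as the set-valued map $x\mapsto R(x)=\{y:(x,y)\in R\}$; $R^{-1}=\{(y,x):(x,y)\in R\}$; $\mathcal R(X,Y)$ is the set of all correspondences. The distortion of a nonempty $\sigma\subseteq X\times Y$ is $\operatorname{dis}\sigma=\sup\{||xx'|-|yy'||:(x,y),(x',y')\in\sigma\}\in[0,\infty]$. A set-valued map $f$ between topological spaces is upper semicontinuous if for every $x$ and every open $U\supseteq f(x)$ there is a neighborhood $V$ of $x$ with $f(x')\subseteq U$ for all $x'\in V$; lower semicontinuous if for every $x$ and every open $U$ with $f(x)\cap U\ne\emptyset$ there is a neighborhood $V$ of $x$ with $f(x')\cap U\neq\emptyset$ for all $x'\in V$; continuous if both. $\mathcal R_{us}(X,Y)$ (resp. $\mathcal R_{ls}(X,Y)$,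 $\mathcal R_{rc}(X,Y)$) is the set of $R\in\mathcal R(X,Y)$ such that both $R$ and $R^{-1}$ are upper semicontinuous (resp. lower semicontinuous, continuous). Then $d_{GH}(X,Y)=\frac12\inf\{\operatorname{dis}R:R\in\mathcal R(X,Y)\}$, and $d^{us}_{GH},d^{ls}_{GH},d^{rc}_{GH}$ are defined by the same formula with $\mathcal R$ replaced by $\mathcal R_{us},\mathcal R_{ls},\mathcal R_{rc}$ respectively. *)

(* Defs.v *)
From HB Require Import structures.
From mathcomp Require Import all_boot all_order all_algebra.
From mathcomp Require Import all_classical all_reals ereal.
Set Implicit Arguments. Unset Strict Implicit. Unset Printing Implicit Defensive.
Import Order.TTheory GRing.Theory Num.Theory.
Local Open Scope classical_set_scope.
Local Open Scope ring_scope.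

Record metric_space (R : realType) := MetricSpace {
  mcarrier :> Type;
  mdist : mcarrier -> mcarrier -> R;
  mdist_ge0 : forall x y, 0 <= mdist x y;
  mdist_eq0 : forall x y, mdist x y = 0 <-> x = y;
  mdist_sym : forall x y, mdist x y = mdist y x;
  mdist_tri : forall x y z, mdist x z <= mdist x y + mdist y z
}.

Section Defs.
Variable R : realType.

Definition mopen (X : metric_space R) (U : set X) : Prop :=
  forall x, U x -> exists2 e : R, 0 < e & forall x', mdist x x' < e -> U x'.

(* upper / lower semicontinuity of a set-valued map between metric spaces
   (a neighborhood of x is a set containing some open ball around x) *)
Definition usc (X Y : metric_space R) (f : X -> set Y) : Prop :=
  forall x (U : set Y), mopen U -> f x `<=` U ->
    exists2 e : R, 0 < e & forall x', mdist x x' < e -> f x' `<=` U.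

Definition lsc (X Y : metric_space R) (f : X -> set Y) : Prop :=
  forall x (U : set Y), mopen U -> f x `&` U !=set0 ->
    exists2 e : R, 0 < e & forall x', mdist x x' < e -> f x' `&` U !=set0.

Definition is_corr (X Y : metric_space R) (S : set (X * Y)) : Prop :=
  (forall x : X, exists y : Y, S (x, y)) /\ (forall y : Y, exists x : X, S (x, y)).

Definition corr_map (X Y : metric_space R) (S : set (X * Y)) : X -> set Y :=
  fun x => [set y | S (x, y)].

Definition corr_inv (X Y : metric_space R) (S : set (X * Y)) : set (Y * X) :=
  [set p | S (p.2, p.1)].

Definition dis (X Y : metric_space R) (S : set (X * Y)) : \bar R :=
  ereal_sup [set (`| mdist pq.1.1 pq.2.1 - mdist pq.1.2 pq.2.2 |)%:E
            | pq in [set pq : (X * Y) * (X * Y) | S pq.1 /\ S pq.2]]%classic.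

Inductive gh_kind := GH_all | GH_us | GH_ls | GH_rc.

Definition admissible (k : gh_kind) (X Y : metric_space R) (S : set (X * Y)) : Prop :=
  is_corr S /\
  match k with
  | GH_all => True
  | GH_us => usc (corr_map S) /\ usc (corr_map (corr_inv S))
  | GH_ls => lsc (corr_map S) /\ lsc (corr_map (corr_inv S))
  | GH_rc => (usc (corr_map S) /\ lsc (corr_map S)) /\
             (usc (corr_map (corr_inv S)) /\ lsc (corr_map (corr_inv S)))
  end.

Definition dGH (k : gh_kind) (X Y : metric_space R) : \bar R :=
  ((2 : R)^-1)%:E * ereal_inf [set dis S | S in admissible k (X:=X) (Y:=Y)]%classic.

End Defs.

(* Main.v *)
Require Import Defs.
From mathcomp Require Import all_boot all_order all_algebra.
From mathcomp Require Import all_classical all_reals ereal.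
From mathcomp Require Import ring lra.
Require Import Defs.
Local Open Scope ring_scope.
Local Open Scope ereal_scope.

Section Helpers.
Set Implicit Arguments.
Unset Strict Implicit.
Import Order.TTheory GRing.Theory Num.Theory.
Local Open Scope classical_set_scope.
Local Open Scope ring_scope.
Local Open Scope ereal_scope.

Lemma inf_tri (R : realType) (A B C : set (\bar R)) :
  (forall a, A a -> 0 <= a) -> (forall b, B b -> 0 <= b) ->
  (forall a b, A a -> B b -> exists2 c, C c & c <= a + b) ->
  ereal_inf C <= ereal_inf A + ereal_inf B.
Proof.
move=> A0 B0 H.
have iA : 0 <= ereal_inf A by apply: le_ereal_inf_tmp => a /A0.
have iB : 0 <= ereal_inf B by apply: le_ereal_inf_tmp => a /B0.
case EA: (ereal_inf A) iA => [a| |] // iA.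
- case EB: (ereal_inf B) iB => [b| |] // iB.
  + apply/lee_addgt0Pr => e e0.
    have e20 : (0 < e / 2)%R by rewrite divr_gt0.
    have [a' Aa' lta] : exists2 x, A x & x < ereal_inf A + (e/2)%:E.
      by apply: lb_ereal_inf_adherent => //; rewrite EA.
    have [b' Bb' ltb] : exists2 x, B x & x < ereal_inf B + (e/2)%:E.
      by apply: lb_ereal_inf_adherent => //; rewrite EB.
    have [c Cc cle] := H _ _ Aa' Bb'.
    apply: (le_trans (ereal_inf_lbound Cc)); apply: (le_trans cle).
    rewrite EA EB in lta ltb.
    apply: (le_trans (leeD (ltW lta) (ltW ltb))).
    by rewrite -!EFinD lee_fin addrACA -splitr.
  + by rewrite addey // leey.
- rewrite addye ?leey //; apply: contraTN iB => /eqP ->; by [].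
Qed.

Lemma dist_self (R : realType) (X : metric_space R) (x : X) : mdist x x = 0%R.
Proof. exact: (proj2 (mdist_eq0 x x)). Qed.

Lemma usc_comp (R : realType) (X Y Z : metric_space R)
  (f : X -> set Y) (g : Y -> set Z) (h : X -> set Z) :
  (forall x z, h x z <-> exists y, f x y /\ g y z) ->
  usc f -> usc g -> usc h.
Proof.
move=> Hh uf ug x U oU hU.
pose V := fun y : Y => exists2 e : R, (0 < e)%R &
   forall y', (mdist y y' < e)%R -> g y' `<=` U.
have oV : mopen V.
  move=> y [e e0 He]; exists e => // y' dy.
  exists (e - mdist y y')%R; first by rewrite subr_gt0.
  move=> y'' d2; apply: He.
  apply: (le_lt_trans (mdist_tri y y' y'')).
  by rewrite -ltrBrDl.
have fV : f x `<=` V.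
  move=> y fxy; apply: ug => // z gz; apply: hU; apply/Hh; by exists y.
have [e e0 He] := uf x V oV fV.
exists e => // x' dx z /Hh [y [fy gy]].
have [e' e'0 He'] := He x' dx y fy.
by apply: (He' y) => //; rewrite dist_self.
Qed.

Lemma lsc_comp (R : realType) (X Y Z : metric_space R)
  (f : X -> set Y) (g : Y -> set Z) (h : X -> set Z) :
  (forall x z, h x z <-> exists y, f x y /\ g y z) ->
  lsc f -> lsc g -> lsc h.
Proof.
move=> Hh lf lg x U oU [z [hz Uz]].
move/Hh: hz => [y [fy gy]].
pose V := fun y : Y => g y `&` U !=set0.
have oV : mopen V.
  move=> y' Vy'; have [e e0 He] := lg y' U oU Vy'; by exists e.
have [e e0 He] := lf x V oV (ex_intro _ y (conj fy (ex_intro _ z (conj gy Uz)))).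
exists e => // x' dx.
have [y' [fy' [z' [gz' Uz']]]] := He x' dx.
exists z'; split => //; apply/Hh; by exists y'.
Qed.

Lemma diag_sc (R : realType) (X : metric_space R) (f : X -> set X) :
  (forall x y, f x y <-> x = y) -> usc f /\ lsc f.
Proof.
move=> Hf; split.
- move=> x U oU hU.
  have Ux : U x := hU x (proj2 (Hf x x) erefl).
  have [e e0 He] := oU x Ux.
  by exists e => // x' d y /Hf <-; apply: He.
- move=> x U oU [y [fy Uy]]; move/Hf: fy => ?; subst y.
  have [e e0 He] := oU x Uy.
  exists e => // x' d; exists x'; split; [exact/Hf | exact: He].
Qed.

Lemma dis_ge0 (R : realType) (X Y : metric_space R) (S : set (X * Y)) p :
  S p -> 0 <= dis S.
Proof.
move=> Sp; apply: le_ereal_sup_tmp.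
exists (`| mdist p.1 p.1 - mdist p.2 p.2 |)%R%:E; last by rewrite lee_fin.
by exists (p, p).
Qed.

Lemma dis_inv (R : realType) (X Y : metric_space R) (S : set (X * Y)) :
  dis (corr_inv S) <= dis S.
Proof.
apply: ge_ereal_sup => _ [[[y x] [y' x']] /= [S1 S2] <-].
apply: ereal_sup_ubound; exists ((x, y), (x', y')) => //=.
by rewrite distrC.
Qed.

Definition ccomp (R : realType) (X Y Z : metric_space R)
  (S1 : set (X * Y)) (S2 : set (Y * Z)) : set (X * Z) :=
  [set p | exists y, S1 (p.1, y) /\ S2 (y, p.2)].

Lemma dis_comp (R : realType) (X Y Z : metric_space R)
  (S1 : set (X * Y)) (S2 : set (Y * Z)) :
  dis (ccomp S1 S2) <= dis S1 + dis S2.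
Proof.
apply: ge_ereal_sup => _ [[[x z] [x' z']] /= [[y [h1 h2]] [y' [h3 h4]]] <-].
apply: (@le_trans _ _ ((`|mdist x x' - mdist y y'|)%R%:E +
                       (`|mdist y y' - mdist z z'|)%R%:E)).
  rewrite -EFinD lee_fin.
  have := ler_normD (mdist x x' - mdist y y')%R (mdist y y' - mdist z z')%R.
  by rewrite addrA subrK.
apply: leeD; apply: ereal_sup_ubound.
- by exists ((x, y), (x', y')).
- by exists ((y, z), (y', z')).
Qed.

Lemma inv_inv (R : realType) (X Y : metric_space R) (S : set (X * Y)) :
  corr_inv (corr_inv S) = S.
Proof. by apply/seteqP; split => -[a b]. Qed.

Lemma adm_inv (R : realType) k (X Y : metric_space R) (S : set (X * Y)) :
  admissible k S -> admissible k (corr_inv S).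
Proof.
move=> [[c1 c2] H]; split; first by split.
rewrite inv_inv.
by case: k H => /=; tauto.
Qed.

Lemma adm_diag (R : realType) k (X : metric_space R) :
  admissible k [set p : X * X | p.1 = p.2].
Proof.
have [u1 l1] : usc (corr_map [set p : X * X | p.1 = p.2]) /\
               lsc (corr_map [set p : X * X | p.1 = p.2]) by apply: diag_sc.
have [u2 l2] : usc (corr_map (corr_inv [set p : X * X | p.1 = p.2])) /\
               lsc (corr_map (corr_inv [set p : X * X | p.1 = p.2])).
  by apply: diag_sc => x y; rewrite /corr_map /corr_inv /=; split => ->.
split; first by split => x; exists x.
by case: k.
Qed.

Lemma adm_comp (R : realType) k (X Y Z : metric_space R)
  (S1 : set (X * Y)) (S2 : set (Y * Z)) :
  admissible k S1 -> admissible k S2 -> admissible k (ccomp S1 S2).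
Proof.
move=> [[a1 b1] H1] [[a2 b2] H2]; split.
  split.
  - move=> x; have [y h1] := a1 x; have [z h2] := a2 y; by exists z, y.
  - move=> z; have [y h2] := b2 z; have [x h1] := b1 y; by exists x, y.
have E1 : forall x z, corr_map (ccomp S1 S2) x z <->
    exists y, corr_map S1 x y /\ corr_map S2 y z by [].
have E2 : forall z x, corr_map (corr_inv (ccomp S1 S2)) z x <->
    exists y, corr_map (corr_inv S2) z y /\ corr_map (corr_inv S1) y x.
  by move=> z x; split => -[y [p q]]; exists y.
case: k H1 H2 => /=.
- by [].
- move=> [u1 u1'] [u2 u2']; split.
  + exact: (usc_comp E1).
  + exact: (usc_comp E2).
- move=> [u1 u1'] [u2 u2']; split.
  + exact: (lsc_comp E1).
  + exact: (lsc_comp E2).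
- move=> [[u1 l1] [u1' l1']] [[u2 l2] [u2' l2']]; split; split.
  + exact: (usc_comp E1).
  + exact: (lsc_comp E1).
  + exact: (usc_comp E2).
  + exact: (lsc_comp E2).
Qed.

Lemma half_ge0 (R : realType) : 0 <= ((2 : R)^-1)%:E.
Proof. by rewrite lee_fin invr_ge0. Qed.

Lemma infdis_ge0 (R : realType) k (X Y : metric_space R) :
  inhabited X ->
  0 <= ereal_inf [set dis S | S in admissible k (X:=X) (Y:=Y)].
Proof.
move=> [x0]; apply: le_ereal_inf_tmp => _ [S [[c1 _] _] <-].
have [y h] := c1 x0; exact: dis_ge0 h.
Qed.

Lemma dGH_ge0 (R : realType) k (X Y : metric_space R) :
  inhabited X -> 0 <= dGH k X Y.
Proof. by move=> hX; apply: mule_ge0; [exact: half_ge0|exact: infdis_ge0]. Qed.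

Lemma dGH_sym_le (R : realType) k (X Y : metric_space R) :
  dGH k Y X <= dGH k X Y.
Proof.
apply: lee_wpmul2l; first exact: half_ge0.
apply: le_ereal_inf_tmp => _ [S HS <-].
apply: le_trans (dis_inv S).
apply: ereal_inf_lbound; exists (corr_inv S) => //; exact: adm_inv.
Qed.

Lemma dGH_refl (R : realType) k (X : metric_space R) :
  inhabited X -> dGH k X X = 0.
Proof.
move=> hX; rewrite /dGH.
suff -> : ereal_inf [set dis S | S in admissible k (X:=X) (Y:=X)] = 0.
  by rewrite mule0.
apply: le_anti; apply/andP; split; last exact: infdis_ge0.
apply: (@le_trans _ _ (dis [set p : X * X | p.1 = p.2])).
  by apply: ereal_inf_lbound; exists [set p : X * X | p.1 = p.2] => //; exact: adm_diag.
apply: ge_ereal_sup => _ [[[a a'] [b b']] /= [e1 e2] <-].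
by rewrite e1 e2 subrr normr0.
Qed.

Lemma dGH_tri (R : realType) k (X Y Z : metric_space R) :
  inhabited X -> inhabited Y ->
  dGH k X Z <= dGH k X Y + dGH k Y Z.
Proof.
move=> hX hY; rewrite /dGH -ge0_muleDr; try exact: infdis_ge0.
apply: lee_wpmul2l; first exact: half_ge0.
apply: inf_tri.
- move=> _ [S [[c1 _] _] <-]; case: hX => x0; have [y h] := c1 x0; exact: dis_ge0 h.
- move=> _ [S [[c1 _] _] <-]; case: hY => x0; have [y h] := c1 x0; exact: dis_ge0 h.
- move=> _ _ [S1 H1 <-] [S2 H2 <-].
  exists (dis (ccomp S1 S2)); last exact: dis_comp.
  by exists (ccomp S1 S2) => //; exact: adm_comp.
Qed.

End Helpers.

Theorem mainTheorem10 (R : realType) (k : gh_kind) (X Y Z : metric_space R)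
  (hX : inhabited X) (hY : inhabited Y) (hZ : inhabited Z) :
  [/\ 0 <= dGH k X Y,
      dGH k X X = 0,
      dGH k X Y = dGH k Y X
    & dGH k X Z <= dGH k X Y + dGH k Y Z].
Proof.
split.
- exact: dGH_ge0.
- exact: dGH_refl.
- by apply: Order.POrderTheory.le_anti; rewrite !dGH_sym_le.
- exact: dGH_tri.
Qed.
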